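(* Let $X$ be a regular topological space. Then $X$ is an Alster space if and only if $X$ is totally Lindelöf.
   Context: A filter base on a set $X$ is a nonempty family $\mathcal{F}\subseteq\mathcal{P}(X)$ such that $\emptyset\notin\mathcal{F}$ and $F_0\cap F_1\in\mathcal{F}$ for all $F_0,F_1\in\mathcal{F}$. A filter base $\mathcal{H}$ extends $\mathcal{F}$ if $\mathcal{F}\subseteq\mathcal{H}$. A filter base $\mathcal{F}$ is stable under countable intersections if for every countable $S\subseteq\mathcal{F}$ there is $H\in\mathcal{F}$ with $H\subseteq\bigcap S$. For $\mathcal{F}\subseteq\mathcal{P}(X)$, $X$ a topological space, $ad(\mathcal{F})=\bigcap\{\overline{F}: F\in\mathcal{F}\}$ (closures in $X$). A filter base $\mathcal{F}$ on $X$ is total if every filter base $\mathcal{H}\supseteq\mathcal{F}$ on $X$ satisfies $ad(\mathcal{H})\neq\emptyset$. $X$ is totally Lindelöf if every filter base on $X$ that is stable under countable intersections is extended by some total filter base on $X$ that is stable under countable intersections. A $G_\delta$ set of $X$ is a countable intersection of open subsets of $X$. An Alster covering of $X$ is a family $\mathcal{G}$ of $G_\delta$ subsets of $X$ such that every compact $K\subseteq X$ is contained in some $G\in\mathcal{G}$. $X$ is an Alster space if every Alster covering of $X$ has a countable subfamily whose union is $X$. *)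

(* Defs.v *)
From HB Require Import structures.
From mathcomp Require Import all_boot all_order all_algebra.
From mathcomp Require Import all_classical all_reals all_analysis.
Set Implicit Arguments. Unset Strict Implicit. Unset Printing Implicit Defensive.
Local Open Scope classical_set_scope.

Definition filter_base (T : Type) (F : set (set T)) : Prop :=
  F !=set0 /\ ~ F set0 /\ (forall F0 F1, F F0 -> F F1 -> F (F0 `&` F1)).

Definition extends (T : Type) (F H : set (set T)) : Prop := F `<=` H.

Definition stable_countable_inter (T : Type) (F : set (set T)) : Prop :=
  forall S : set (set T), countable S -> S `<=` F ->
    exists2 H, F H & H `<=` \bigcap_(A in S) A.

Definition ad (T : topologicalType) (F : set (set T)) : set T :=
  \bigcap_(A in F) closure A.

Definition total (T : topologicalType) (F : set (set T)) : Prop :=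
  forall H : set (set T), filter_base H -> extends F H -> ad H !=set0.

Definition totally_Lindelof (T : topologicalType) : Prop :=
  forall F : set (set T), filter_base F -> stable_countable_inter F ->
    exists H : set (set T),
      [/\ filter_base H, extends F H, total H & stable_countable_inter H].

Definition G_delta (T : topologicalType) (G : set T) : Prop :=
  exists U : nat -> set T, (forall n, open (U n)) /\ G = \bigcap_n U n.

Definition Alster_covering (T : topologicalType) (G : set (set T)) : Prop :=
  (forall A, G A -> G_delta A) /\
  (forall K : set T, compact K -> exists2 A, G A & K `<=` A).

Definition Alster_space (T : topologicalType) : Prop :=
  forall G : set (set T), Alster_covering G ->
    exists2 C : set (set T), C `<=` G /\ countable C & \bigcup_(A in C) A = setT.

(* Main.v *)
Require Import Defs.
From mathcomp Require Import all_boot all_order all_algebra.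
From mathcomp Require Import all_classical all_reals all_analysis.
Set Implicit Arguments. Unset Strict Implicit. Unset Printing Implicit Defensive.
Local Open Scope classical_set_scope.

Lemma countableS' (U : Type) (A B : set U) : A `<=` B -> countable B -> countable A.
Proof. by move=> AB cB; exact: card_le_trans (subset_card_le AB) cB. Qed.

Lemma countable_img (U V : Type) (f : U -> V) (A : set U) :
  countable A -> countable (f @` A).
Proof. by move=> cA; exact: card_le_trans (card_image_le f A) cA. Qed.

Lemma countableU' (U : Type) (A B : set U) :
  countable A -> countable B -> countable (A `|` B).
Proof.
move=> cA cB; apply: (@countableS' _ _ (\bigcup_(b in [set: bool]) (if b then A else B))).
  by move=> x [Ax|Bx]; [exists true|exists false].
apply: bigcup_countable; first exact: countableP.
by move=> [] _.
Qed.

Section Main.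
Variable T : topologicalType.

Lemma G_deltaT : G_delta (@setT T).
Proof.
exists (fun=> setT); split; first by move=> _; exact: openT.
by apply/seteqP; split => x.
Qed.

Lemma G_deltaI (G1 G2 : set T) : G_delta G1 -> G_delta G2 -> G_delta (G1 `&` G2).
Proof.
move=> [U1 [oU1 ->]] [U2 [oU2 ->]]; exists (fun n => U1 n `&` U2 n); split.
  by move=> n; exact: openI.
apply/seteqP; split=> x.
  by move=> [h1 h2] n _; split; [exact: h1|exact: h2].
by move=> h; split=> n _; have [] := h n I.
Qed.

Lemma G_delta_fam (W : set (set T)) : countable W -> (forall U, W U -> open U) ->
  G_delta (\bigcap_(U in W) U).
Proof.
move=> cW oW; have [g gs] := pcard_surjP cW.
exists (fun n => if pselect (W (g n)) is left _ then g n else setT); split.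
  by move=> n; case: pselect => [/oW//|_]; exact: openT.
apply/seteqP; split=> x.
  by move=> Wx n _; case: pselect => // Wg; exact: Wx.
move=> Hx U WU; have [n _ gnU] := gs U WU.
move: (Hx n I); case: pselect => [_|]; rewrite gnU // => /(_ WU).
Qed.

Lemma G_delta_bigcap (J : Type) (D : set J) (f : J -> set T) : countable D ->
  (forall i, D i -> G_delta (f i)) -> G_delta (\bigcap_(i in D) f i).
Proof.
move=> cD Gf.
have hex : forall i, exists V : nat -> set T,
  D i -> (forall n, open (V n)) /\ f i = \bigcap_n V n.
  move=> i; case: (pselect (D i)) => Di; first by have [V hV] := Gf i Di; exists V.
  by exists (fun=> setT).
have [U hU] := choice hex.
have -> : \bigcap_(i in D) f i = \bigcap_(V in \bigcup_(i in D) range (U i)) V.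
  apply/seteqP; split=> x.
    move=> hx V [i Di [n _ <-]]; have [_ e] := hU i Di.
    by have := hx i Di; rewrite e => /(_ n I).
  move=> hx i Di; have [_ ->] := hU i Di; move=> n _; apply: hx.
  by exists i => //; exists n.
apply: G_delta_fam.
  apply: bigcup_countable => // i _; exact: countable_img (countableP _).
by move=> V [i Di [n _ <-]]; exact: (hU i Di).1 n.
Qed.

Lemma fb_ne (H : set (set T)) B : filter_base H -> H B -> B !=set0.
Proof. by move=> [_ [H0 _]] HB; apply/set0P/eqP => e; apply: H0; rewrite -e. Qed.

Lemma ad_sub (H H' : set (set T)) : extends H H' -> ad H' `<=` ad H.
Proof. by move=> s x hx A HA; exact: hx A (s A HA). Qed.

Definition ext (H O : set (set T)) :=
  [set E | exists B P, [/\ H B, O P & E = B `&` P]].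

Lemma ext_fb (H O : set (set T)) : filter_base H -> O setT ->
  (forall P Q, O P -> O Q -> O (P `&` Q)) ->
  (forall B P, H B -> O P -> B `&` P !=set0) ->
  filter_base (ext H O) /\ extends H (ext H O).
Proof.
move=> [[B0 HB0] [H0 HI]] OT OI meet.
have ext1 : extends H (ext H O).
  by move=> B HB; exists B, setT; split => //; rewrite setIT.
split=> //; split; first by exists B0; exact: ext1.
split.
  move=> [B [P [HB OP e]]]; have [x] := meet B P HB OP; by rewrite -e.
move=> _ _ [B1 [P1 [HB1 OP1 ->]]] [B2 [P2 [HB2 OP2 ->]]].
exists (B1 `&` B2), (P1 `&` P2); split; [exact: HI|exact: OI|].
by rewrite setIACA.
Qed.

Lemma total_open (H : set (set T)) (U : set T) : filter_base H -> Defs.total H ->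
  open U -> ad H `<=` U -> exists2 B, H B & B `<=` U.
Proof.
move=> fH tH oU adU; apply: contrapT => nB.
pose O := fun P : set T => P = setT \/ P = ~` U.
have OI : forall P Q, O P -> O Q -> O (P `&` Q).
  move=> P Q [->|->] [->|->]; rewrite ?setIT ?setTI ?setIid; by [left|right].
have meet : forall B P, H B -> O P -> B `&` P !=set0.
  move=> B P HB [->|->]; first by rewrite setIT; exact: fb_ne fH HB.
  apply/set0P/eqP => e; apply: nB; exists B => // x Bx; apply: contrapT => nUx.
  have : (B `&` ~` U) x by []. by rewrite e.
have [fH' eH'] := ext_fb fH (or_introl erefl) OI meet.
have [x adx] := tH _ fH' eH'.
have Ux : U x := adU _ (ad_sub eH' adx).
have [B0 HB0] := fH.1.
have := adx (B0 `&` ~` U) (ex_intro _ B0 (ex_intro _ (~` U) (And3 HB0 (or_intror erefl) erefl))).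
have /closure_id e := open_closedC oU.
move=> /(closureS (@subIsetr _ B0 (~` U))); rewrite -e; exact.
Qed.

Lemma compact_ad (H : set (set T)) : regular_space T -> filter_base H -> Defs.total H ->
  compact (ad H).
Proof.
move=> reg fH tH L PL LK; apply: contrapT => nK.
pose O := [set P : set T | open P /\ exists2 L', L L' & L' `<=` P].
have OT : O setT by split; [exact: openT | exists setT => //; exact: filterT].
have OI : forall P Q, O P -> O Q -> O (P `&` Q).
  move=> P Q [oP [L1 LL1 s1]] [oQ [L2 LL2 s2]]; split; first exact: openI.
  exists (L1 `&` L2); first exact: filterI.
  by move=> x [/s1 ? /s2 ?].
have meet : forall B P, H B -> O P -> B `&` P !=set0.
  move=> B P HB [oP [L1 LL1 s1]].
  have [y [L1y Ky]] := filter_ex (filterI LL1 LK).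
  exact: Ky B HB P (open_nbhs_nbhs (conj oP (s1 y L1y))).
have [fH' eH'] := ext_fb fH OT OI meet.
have [z adz] := tH _ fH' eH'.
have Kz : ad H z := ad_sub eH' adz.
apply: nK; exists z; split=> //.
move=> L1 N LL1 Nz; apply: contrapT => hne.
have [N' N'z cN'] := reg z N Nz.
have OP : O (~` closure N').
  split; first by apply: closed_openC; exact: closed_closure.
  exists L1 => // x L1x cx; apply: hne; exists x; split => //; exact: cN'.
have [B0 HB0] := fH.1.
have := adz (B0 `&` ~` closure N') (ex_intro _ B0 (ex_intro _ _ (And3 HB0 OP erefl))) N' N'z.
case=> y [[_ ncy] N'y]; apply: ncy; exact: subset_closure.
Qed.


Lemma TL_Alster : regular_space T -> totally_Lindelof T -> Alster_space T.
Proof.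
move=> reg TL G [GG GK].
case: (pselect (exists2 C : set (set T), C `<=` G /\ countable C &
  \bigcup_(A in C) A = setT)) => // nC.
exfalso.
pose F := [set A : set T | exists C : set (set T),
  [/\ C `<=` G, countable C & A = ~` \bigcup_(D in C) D]].
have fF : filter_base F.
  split; first by exists setT, set0; split => //; rewrite bigcup_set0 setC0.
  split.
    move=> [C [CG cntC e]]; apply: nC; exists C => //.
    apply/seteqP; split => // x _; apply: contrapT => nx.
    have : (~` \bigcup_(D in C) D) x by [].
    by rewrite -e.
  move=> _ _ [C1 [C1G cC1 ->]] [C2 [C2G cC2 ->]]; exists (C1 `|` C2); split.
  - by move=> D [/C1G|/C2G].
  - exact: countableU'.
  - by rewrite bigcup_setU setCU.
have sF : stable_countable_inter F.
  move=> S cS SF.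
  have hex : forall A, exists C : set (set T), S A ->
     [/\ C `<=` G, countable C & A = ~` \bigcup_(D in C) D].
    move=> A; case: (pselect (S A)) => SA; first by have [C hC] := SF A SA; exists C.
    by exists set0.
  have [fC hC] := choice hex.
  exists (~` \bigcup_(D in \bigcup_(A in S) fC A) D).
    exists (\bigcup_(A in S) fC A); split => //.
    - by move=> D [A SA]; case: (hC A SA) => CG _ _; exact: CG.
    - by apply: bigcup_countable => // A SA; case: (hC A SA).
  move=> x nx A SA; case: (hC A SA) => _ _ ->; move=> [D CD Dx]; apply: nx.
  by exists D => //; exists A.
have [H [fH eH tH sH]] := TL F fF sF.
have cK := compact_ad reg fH tH.
have [Gd GdG KGd] := GK _ cK.
have [U [oU eU]] := GG _ GdG.
have hB : forall n, exists B, H B /\ B `<=` U n.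
  move=> n; have adU : ad H `<=` U n.
    by move=> x hx; move: (KGd x hx); rewrite eU => /(_ n Logic.I).
  by have [B HB BU] := total_open fH tH (oU n) adU; exists B.
have [Bn hBn] := choice hB.
have rH : range Bn `<=` H by move=> _ [n _ <-]; case: (hBn n).
have [B HB sB] := sH (range Bn) (countable_img _ (countableP _)) rH.
have HC : H (~` Gd).
  apply: eH; exists [set Gd]; split.
  - by move=> _ ->.
  - exact: countable1.
  - by rewrite bigcup_set1.
have [x [Bx nGx]] := fb_ne fH (fH.2.2 _ _ HB HC).
apply: nGx; rewrite eU => n _; apply: (proj2 (hBn n)).
by apply: (sB x Bx (Bn n)); exists n.
Qed.

Lemma Alster_TL : Alster_space T -> totally_Lindelof T.
Proof.
move=> Al F fF sF.
have [[A0 FA0] [F0 FI]] := fF.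
pose P K := exists G A, [/\ G_delta G, K `<=` G, F A & G `&` A = set0].
case: (pselect (forall K, compact K -> P K)) => [allP|].
  exfalso.
  pose GG := [set G | exists A, [/\ G_delta G, F A & G `&` A = set0]].
  have hACov : Alster_covering GG.
    split; first by move=> G [A []].
    by move=> K cK; have [G [A [GdG KG FA e]]] := allP K cK; exists G => //; exists A.
  have [C [CG cntC] covC] := Al GG hACov.
  have hex : forall G, exists A, GG G -> F A /\ G `&` A = set0.
    move=> G; case: (pselect (GG G)) => GGG; last by exists A0.
    by have [A [_ FA e]] := GGG; exists A.
  have [fA hA] := choice hex.
  have rF : fA @` C `<=` F by move=> _ [G CG' <-]; exact: (hA G (CG G CG')).1.
  have [A' FA' sA'] := sF (fA @` C) (countable_img _ cntC) rF.
  have [a A'a] := fb_ne fF FA'.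
  have : (\bigcup_(A in C) A) a by rewrite covC.
  case=> G CG' Ga.
  have fAa : fA G a by apply: (sA' a A'a); exists G.
  have e := (hA G (CG G CG')).2.
  have : (G `&` fA G) a by split.
  by rewrite e.
move=> /existsNP [K /not_implyP [cK nPK]].
have meetK : forall G A, G_delta G -> K `<=` G -> F A -> G `&` A !=set0.
  move=> G A GdG KG FA; apply/set0P/eqP => e; apply: nPK; by exists G, A; split.
pose H := [set B | exists A G, [/\ F A, G_delta G, K `<=` G & B = A `&` G]].
exists H; split.
- split; first by exists (A0 `&` setT), A0, setT; split => //; exact: G_deltaT.
  split.
    move=> [A [G [FA GdG KG e]]]; have := meetK G A GdG KG FA.
    by rewrite setIC -e; case.
  move=> _ _ [A1 [G1 [FA1 Gd1 KG1 ->]]] [A2 [G2 [FA2 Gd2 KG2 ->]]].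
  exists (A1 `&` A2), (G1 `&` G2); split.
  + exact: FI.
  + exact: G_deltaI.
  + by move=> x Kx; split; [apply: KG1|apply: KG2].
  + by rewrite setIACA.
- by move=> A FA; exists A, setT; split => //; [exact: G_deltaT | rewrite setIT].
- move=> H' fH' eH'.
  have [[B0 HB0] [H'0 H'I]] := fH'.
  have KB : forall B, H' B -> K `&` closure B !=set0.
    move=> B HB; apply: contrapT => nK.
    have Gd : G_delta (~` closure B).
      exists (fun=> ~` closure B); split.
        by move=> _; apply: closed_openC; exact: closed_closure.
      by apply/seteqP; split => [x hx n _ // | x /(_ 0%N Logic.I)].
    have KU : K `<=` ~` closure B by move=> x Kx cx; apply: nK; exists x.
    have HU : H' (A0 `&` ~` closure B) by apply: eH'; exists A0, (~` closure B); split.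
    have [y [By [_ ncy]]] := fb_ne fH' (H'I _ _ HB HU).
    by apply: ncy; exact: subset_closure.
  pose L := filter_from H' (fun B => K `&` closure B).
  have FL : Filter L.
    apply: filter_from_filter; first by exists B0.
    move=> B1 B2 HB1 HB2; exists (B1 `&` B2); first exact: H'I.
    move=> x [Kx cx]; split; split => //; [exact: (closureS (@subIsetl _ B1 B2)) | exact: (closureS (@subIsetr _ B1 B2))].
  have PL : ProperFilter L by apply: filter_from_proper => // B HB; exact: KB.
  have LK : L K by exists B0 => // x [].
  have [x [Kx clx]] := cK L PL LK.
  exists x => B HB.
  have /closure_id -> : closed (closure B) by exact: closed_closure.
  move=> N Nx.
  have LB : L (K `&` closure B) by exists B.
  have [y [[_ cy] Ny]] := clx _ N LB Nx.
  by exists y.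
- move=> S cS SH.
  have hex : forall B, exists p : set T * set T, S B ->
      [/\ F p.1, G_delta p.2, K `<=` p.2 & B = p.1 `&` p.2].
    move=> B; case: (pselect (S B)) => SB; last by exists (setT, setT).
    by have [A [G hh]] := SH B SB; exists (A, G).
  have [fAG hAG] := choice hex.
  have rF : (fun B => (fAG B).1) @` S `<=` F.
    by move=> _ [B SB <-]; case: (hAG B SB).
  have [A' FA' sA'] := sF ((fun B => (fAG B).1) @` S) (countable_img _ cS) rF.
  exists (A' `&` \bigcap_(B in S) (fAG B).2).
    exists A', (\bigcap_(B in S) (fAG B).2); split => //.
    + by apply: G_delta_bigcap => // B SB; case: (hAG B SB).
    + by move=> x Kx B SB; case: (hAG B SB) => _ _ KG _; exact: KG.
  move=> x [A'x Gx] B SB; case: (hAG B SB) => _ _ _ ->; split.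
    by apply: (sA' x A'x); exists B.
  exact: Gx.
Qed.

End Main.

Theorem theorem1 (T : topologicalType) :
  @regular_space T -> (Alster_space T <-> totally_Lindelof T).
Proof.
move=> reg; split; [exact: Alster_TL | exact: TL_Alster].
Qed.
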